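(* For all $n\ge1$, $Q_{\lambda_{\mathcal{NC}}}(\mathcal{NC}_n)\cong\mathcal{NCD}yck_n$.
   Context: A partition of $[n]$ is noncrossing if there are no $a<b<c<d$ with $a,c$ in one block and $b,d$ in another. $\mathcal{NC}_n$ is the set of noncrossing partitions of $[n]$ ordered by refinement; a cover $\pi\lessdot\sigma$ merges two blocks $B_i,B_j$, and if $\min B_i<\min B_j$ then $\lambda_{\mathcal{NC}}(\pi\lessdot\sigma)=\max\{a\in B_i:a<\min B_j\}$ (integer labels). $Q_\lambda(P)$ for an edge labeling $\lambda$ of a graded poset $P$ with $\hat 0$ having the rank two switching property (for every saturated chain $\hat0=x_0\lessdot\cdots\lessdot x_k$ and $i$ with $\lambda(x_{i-1}\lessdot x_i)<\lambda(x_i\lessdot x_{i+1})$ there is a unique $x_i'$ with $x_{i-1}\lessdot x_i'\lessdot x_{i+1}$ whose labels are those two labels swapped): $C(P)$ is the set of saturated chains from $\hat0$ ordered by inclusion; $\mathbf c_1\sim_\lambda\mathbf c_2$ iff they end at the same $y$ and are connected by quadratic exchanges (replacing $x_i$ by $x_i'$, forwards or backwards) among maximal chains of $[\hat0,y]$; $Q_\lambda(P)$ is the set of classes ordered by the transitive closure of: $X\le Y$ if some $\mathbf c\in X$, $\mathbf d\in Y$ have $\mathbf c\subseteq\mathbf d$. ($\lambda_{\mathcal{NC}}$ has this property.) Labeled Dyck paths: for a finite set $B=\{b_1<\cdots<b_j\}\subseteq[n]$, a labeled Dyck path on $B$ is a lattice path from $(0,0)$ to $(j-1,j-1)$ with unit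 north and east steps never going below $y=x$, where the bottom point $(i-1,0)$ carries the label $b_i$; equivalently it is a function $e:B\to\mathbb Z_{\ge0}$ ($e(b_i)$ = number of north steps on the line $x=i-1$) with $\sum_i e(b_i)=j-1$ and $e(b_1)+\cdots+e(b_i)\ge i$ for $1\le i\le j-1$. Merging: given labeled Dyck paths $e$ on $B$ and $f$ on $C$ with $B\cap C=\emptyset$, $b_1=\min B<\min C$, and $C$ contained in an interval $(b_i,b_{i+1})$ of consecutive elements of $B$ (with $b_{j+1}=\infty$), the merge is the labeled Dyck path $g$ on $B\cup C$ with $g=f$ on $C$, $g=e$ on $B\setminus\{b_i\}$ and $g(b_i)=e(b_i)+1$ (here $b_i=\max\{b\in B:b<\min C\}$). $\mathcal{NCD}yck_n$ is the set of collections of labeled Dyck paths whose label sets form a noncrossing partition of $[n]$, partially ordered as the reflexive-transitive closure of the relation $F\lessdot F'$ whenever $F'$ is obtained from $F$ by merging two of its labeled Dyck paths (with the resulting label sets still a noncrossing partition). *)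

(* Defs.v *)
From Stdlib Require Import Relations.Relation_Operators.
From mathcomp Require Import all_boot.
Set Implicit Arguments. Unset Strict Implicit. Unset Printing Implicit Defensive.

(* Generic construction Q_lambda(P) for a poset given by its cover     *)
(* relation [cov], its bottom element [z] (= 0^) and an edge labeling  *)
(* [lam] (integer labels, here natural numbers).                       *)
Section QLambda.
Variables (T : eqType) (z : T) (cov : rel T) (lam : T -> T -> nat).

(* C(P): saturated chains z = x_0 <. x_1 <. ... <. x_k, stored as the
   sequence [x_1; ...; x_k]; the full chain is [z :: val c]. *)
Definition chainT := {s : seq T | path cov z s}.

Definition full_chain (c : chainT) : seq T := z :: val c.

(* Quadratic exchange: d is obtained from c by replacing x_i (0<i<k)
   by x_i' with x_{i-1} <. x_i' <. x_{i+1} (guaranteed since d is a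
   saturated chain), where lam(x_{i-1},x_i) < lam(x_i,x_{i+1}) and the
   labels along x_{i-1},x_i',x_{i+1} are these two labels swapped. *)
Definition qexch (c d : chainT) : Prop :=
  let x := full_chain c in let y := full_chain d in
  size x = size y /\
  exists i, [/\ 0 < i, i.+1 < size x &
    (forall j, j != i -> nth z x j = nth z y j)] /\ [/\
    lam (nth z x i.-1) (nth z x i) < lam (nth z x i) (nth z x i.+1),
    lam (nth z x i.-1) (nth z y i) = lam (nth z x i) (nth z x i.+1) &
    lam (nth z y i) (nth z x i.+1) = lam (nth z x i.-1) (nth z x i)].

Definition qsim (c d : chainT) : Prop :=
  last z (val c) = last z (val d) /\ clos_refl_sym_trans chainT qexch c d.

Definition Qtype := {X : chainT -> Prop | exists c, X = qsim c}.

Definition Qrel (X Y : Qtype) : Prop :=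
  exists c d, [/\ sval X c, sval Y d & {subset full_chain c <= full_chain d}].

Definition Qle : Qtype -> Qtype -> Prop := clos_trans Qtype Qrel.

End QLambda.

(* Noncrossing partitions of [n], with [n] represented by 'I_n        *)
(* (i.e. 1..n relabeled 0..n-1, order preserved).                      *)
Section NC.
Variable n : nat.

Definition crossing (B C : {set 'I_n}) : bool :=
  [exists a : 'I_n, exists b : 'I_n, exists c : 'I_n, exists d : 'I_n,
    [&& a < b, b < c, c < d, a \in B, c \in B, b \in C & d \in C]].

Definition isNC (P : {set {set 'I_n}}) : bool :=
  partition P [set: 'I_n] &&
  [forall B in P, forall C in P, (B != C) ==> ~~ crossing B C].

Definition merge (P : {set {set 'I_n}}) (B C : {set 'I_n}) : {set {set 'I_n}} :=
  ((P :\ B) :\ C) :|: [set B :|: C].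

Definition coverNC (P Q : {set {set 'I_n}}) : bool :=
  [&& isNC P, isNC Q &
      [exists B in P, exists C in P, (B != C) && (Q == merge P B C)]].

Definition zNC : {set {set 'I_n}} := [set [set x] | x : 'I_n].

Definition smin (B : {set 'I_n}) : nat := \big[minn/n]_(a in B) val a.
Definition smaxlt (B : {set 'I_n}) (m : nat) : nat :=
  \max_(a in B | val a < m) val a.

(* lambda_NC(P <. Q) = max { a in B_i : a < min B_j }, where Q merges
   blocks B_i, B_j of P with min B_i < min B_j (0 if not a cover). *)
Definition lamNC (P Q : {set {set 'I_n}}) : nat :=
  match [pick BC : {set 'I_n} * {set 'I_n} |
           [&& BC.1 \in P, BC.2 \in P, BC.1 != BC.2,
               Q == merge P BC.1 BC.2 & smin BC.1 < smin BC.2]] with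
  | Some BC => smaxlt BC.1 (smin BC.2)
  | None => 0
  end.

(* Labeled Dyck paths and NCDyck_n.  A collection of labeled Dyck      *)
(* paths is encoded as its (noncrossing) partition of label sets P     *)
(* together with the function e : [n] -> nat whose restriction to each *)
(* block B of P is the labeled Dyck path on B.                         *)
Definition isDyck (B : {set 'I_n}) (e : {ffun 'I_n -> nat}) : bool :=
  (\sum_(a in B) e a == #|B| - 1) &&
  [forall b in B,
     (#|[set a in B | a <= b]| < #|B|) ==>
     (#|[set a in B | a <= b]| <= \sum_(a in B | a <= b) e a)].

Definition isNCD (F : {set {set 'I_n}} * {ffun 'I_n -> nat}) : bool :=
  isNC F.1 && [forall B in F.1, isDyck B F.2].

Definition NCD := {F : {set {set 'I_n}} * {ffun 'I_n -> nat} | isNCD F}.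

(* G is obtained from F by merging the Dyck paths on blocks B, C of F,
   where min B < min C and C lies strictly between b = b_i in B and the
   next element of B (if any). *)
Definition mergeD (F G : NCD) : Prop :=
  let P := (val F).1 in let e := (val F).2 in
  exists B C, [/\ B \in P, C \in P, B != C, smin B < smin C &
    exists2 b, b \in B &
      [/\ (forall c, c \in C -> b < c /\ (forall b', b' \in B -> b < b' -> c < b')),
          (val G).1 = merge P B C &
          (val G).2 = [ffun x => if x == b then (e x).+1 else e x]]].

Definition NCDle : NCD -> NCD -> Prop := clos_refl_trans NCD mergeD.

End NC.

Definition poset_iso (A B : Type) (leA : A -> A -> Prop) (leB : B -> B -> Prop) :=
  exists f : A -> B, bijective f /\ forall x y, leA x y <-> leB (f x) (f y).

(* Main.v *)
Require Import Defs.
From Stdlib Require Import Relations.Relation_Operators.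
From Stdlib Require Import ClassicalEpsilon ProofIrrelevance FunctionalExtensionality PropExtensionality.
From mathcomp Require Import all_boot.
From mathcomp Require Import zify.
Set Implicit Arguments. Unset Strict Implicit. Unset Printing Implicit Defensive.

Notation mergeP := Defs.merge.
Section Part.
Variable n : nat.
Local Notation T := ('I_n).
Local Notation PT := {set {set T}}.

Definition part (P : PT) := partition P [set: T].

Lemma partP (P : PT) : part P <->
  [/\ set0 \notin P, (forall x, exists2 X, X \in P & x \in X) &
      (forall X Y x, X \in P -> Y \in P -> x \in X -> x \in Y -> X = Y)].
Proof.
split.
- case/and3P=> /eqP cov /trivIsetP triv s0; split=> //.
  + move=> x; have : x \in cover P by rewrite cov inE.
    by case/bigcupP=> X HX Hx; exists X.
  + move=> X Y x HX HY xX xY; apply/eqP; apply/negPn/negP=> neq.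
    have := triv X Y HX HY neq; rewrite -setI_eq0 => /eqP/setP/(_ x).
    by rewrite inE xX xY inE.
- case=> s0 cov triv; apply/and3P; split=> //.
  + apply/eqP/setP=> x; rewrite inE; case: (cov x)=> X HX Hx.
    by apply/bigcupP; exists X.
  + apply/trivIsetP=> X Y HX HY neq; rewrite -setI_eq0; apply/eqP/setP=> x.
    rewrite !inE; apply/negbTE/negP=> /andP [xX xY].
    by move: neq; rewrite (triv X Y x HX HY xX xY) eqxx.
Qed.

Lemma part_ne (P : PT) X : part P -> X \in P -> exists x, x \in X.
Proof.
case/partP=> s0 _ _ HX; case: (set_0Vmem X)=> [E|[x Hx]]; last by exists x.
by move: s0; rewrite -E HX.
Qed.

Lemma part_eq (P : PT) X Y x : part P -> X \in P -> Y \in P -> x \in X -> x \in Y -> X = Y.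
Proof. by case/partP=> _ _ t; apply: t. Qed.

Lemma part_cov (P : PT) x : part P -> exists2 X, X \in P & x \in X.
Proof. by case/partP. Qed.

Lemma merge_mem (P : PT) (B C X : {set T}) :
  (X \in mergeP P B C) = ((X \in P) && (X != B) && (X != C)) || (X == B :|: C).
Proof. by rewrite /mergeP /Defs.merge !inE; case: (X \in P); case: (X == B); case: (X == C); rewrite /= ?andbF ?andbT. Qed.


Lemma merge_part (P : PT) B C : part P -> B \in P -> C \in P -> B != C ->
  part (mergeP P B C).
Proof.
move=> pP HB HC nBC; case/partP: (pP)=> s0 cov un; apply/partP; split.
- rewrite merge_mem negb_or; apply/andP; split.
  + by apply/negP=> /andP [/andP [H _] _]; rewrite H in s0.
  + case: (part_ne pP HB)=> b Hb; apply/negP=> /eqP/setP/(_ b).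
    by rewrite !inE Hb.
- move=> x; case: (cov x)=> X HX xX.
  case: (boolP ((X != B) && (X != C)))=> [/andP [h1 h2]|].
  + by exists X=> //; rewrite merge_mem HX h1 h2.
  + rewrite negb_and !negbK=> h; exists (B :|: C); first by rewrite merge_mem eqxx orbT.
    by case/orP: h=> /eqP E; rewrite inE -E xX ?orbT.
- move=> X Y x; rewrite !merge_mem.
  have key : forall X, X \in P -> X != B -> X != C -> x \in X -> x \in B :|: C -> False.
    move=> Z HZ h1 h2 xZ; rewrite inE=> /orP [xB|xC].
    + by move: h1; rewrite (un _ _ _ HZ HB xZ xB) eqxx.
    + by move: h2; rewrite (un _ _ _ HZ HC xZ xC) eqxx.
  case/orP=> [/andP [/andP [HX h1] h2]|/eqP ->]; case/orP=> [/andP [/andP [HY h3] h4]|/eqP ->] //.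
  + by move=> xX xY; apply: (un _ _ x).
  + by move=> xX xU; case: (key X HX h1 h2 xX xU).
  + by move=> xU xY; case: (key Y HY h3 h4 xY xU).
Qed.

Lemma BC_notin (P : PT) B C : part P -> B \in P -> C \in P -> B != C ->
  B :|: C \notin P.
Proof.
move=> pP HB HC nBC; apply/negP=> HU.
case: (part_ne pP HB)=> b Hb; case: (part_ne pP HC)=> c Hc.
have E1 : B :|: C = B by apply: (part_eq pP HU HB (x:=b)); rewrite ?inE ?Hb.
have : C = B :|: C by apply: (part_eq pP HC HU (x:=c)); rewrite ?inE ?Hc ?orbT.
by rewrite E1 => E; rewrite E eqxx in nBC.
Qed.

Lemma card_merge (P : PT) B C : part P -> B \in P -> C \in P -> B != C ->
  #|mergeP P B C| + 1 = #|P|.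
Proof.
move=> pP HB HC nBC.
rewrite /mergeP /Defs.merge setUC cardsU1.
have -> : B :|: C \notin (P :\ B) :\ C by rewrite !inE (negbTE (BC_notin pP HB HC nBC)) !andbF.
rewrite (cardsD1 B P) HB (cardsD1 C (P :\ B)) !inE HC eq_sym nBC /=.
by rewrite add1n addn1 add1n.
Qed.

Lemma merge_inj (P : PT) B C B' C' : part P -> B \in P -> C \in P -> B != C ->
  B' \in P -> C' \in P -> B' != C' -> mergeP P B C = mergeP P B' C' ->
  (B = B' /\ C = C') \/ (B = C' /\ C = B').
Proof.
move=> pP HB HC nBC HB' HC' nBC' E.
have : B :|: C \in mergeP P B' C' by rewrite -E merge_mem eqxx orbT.
rewrite merge_mem (negbTE (BC_notin pP HB HC nBC)) /= => /eqP EU.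
case: (part_ne pP HB)=> b Hb; case: (part_ne pP HC)=> c Hc.
have : b \in B' :|: C' by rewrite -EU inE Hb.
have : c \in B' :|: C' by rewrite -EU inE Hc orbT.
rewrite !inE => /orP [cB'|cC'] /orP [bB'|bC'].
- have E1 := part_eq pP HB HB' Hb bB'; have E2 := part_eq pP HC HB' Hc cB'.
  by rewrite E1 E2 eqxx in nBC.
- by right; split; [apply: (part_eq pP HB HC' Hb bC') | apply: (part_eq pP HC HB' Hc cB')].
- by left; split; [apply: (part_eq pP HB HB' Hb bB') | apply: (part_eq pP HC HC' Hc cC')].
- have E1 := part_eq pP HB HC' Hb bC'; have E2 := part_eq pP HC HC' Hc cC'.
  by rewrite E1 E2 eqxx in nBC.
Qed.

Lemma mergeC (P : PT) B C : mergeP P B C = mergeP P C B.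
Proof.
apply/setP=> X; rewrite !merge_mem setUC; congr (_ || _).
by rewrite -!andbA; congr (_ && _); rewrite andbC.
Qed.

Lemma crossingP (B C : {set T}) : reflect
  (exists a b c d : T, [/\ a < b, b < c, c < d & [/\ a \in B, c \in B, b \in C & d \in C]])
  (crossing B C).
Proof.
apply: (iffP idP).
- case/existsP=> a /existsP [b /existsP [c /existsP [d H]]].
  case/and5P: H=> h1 h2 h3 h4 /and3P [h5 h6 h7].
  by exists a, b, c, d.
- case=> a [b [c [d [h1 h2 h3 [h4 h5 h6 h7]]]]].
  apply/existsP; exists a; apply/existsP; exists b; apply/existsP; exists c.
  apply/existsP; exists d; by rewrite h1 h2 h3 h4 h5 h6 h7.
Qed.

Lemma crossing_mono (B C B' C' : {set T}) : crossing B C -> B \subset B' ->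
  C \subset C' -> crossing B' C'.
Proof.
move=> /crossingP [a [b [c [d [h1 h2 h3 [h4 h5 h6 h7]]]]]] /subsetP s1 /subsetP s2.
by apply/crossingP; exists a, b, c, d; split=> //; split; auto.
Qed.

Definition gapped (B C : {set T}) (b : T) :=
  b \in B /\ forall c, c \in C -> b < c /\ (forall b', b' \in B -> b < b' -> c < b').

Lemma gapped_nc (B C : {set T}) b : gapped B C b -> ~~ crossing B C /\ ~~ crossing C B.
Proof.
case=> Hb g; split; apply/negP=> /crossingP [x1 [x2 [x3 [x4 [h1 h2 h3 [h4 h5 h6 h7]]]]]].
- case: (g x2 h6)=> l1 l2; have := l2 x3 h5 (ltn_trans l1 h2).
  case: (g x4 h7)=> l3 l4; have := l4 x3 h5 (ltn_trans l1 h2).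
  by move=> l5 _; move: (ltn_trans h3 l5); rewrite ltnn.
- case: (g x1 h4)=> l1 _; case: (g x3 h5)=> _ l2.
  have := l2 x2 h6 (ltn_trans l1 h1).
  by move=> l5; move: (ltn_trans h2 l5); rewrite ltnn.
Qed.

Lemma smin_le_seq (B : {set T}) (r : seq T) m : m \in r -> m \in B ->
  \big[minn/n]_(i <- r | i \in B) val i <= m.
Proof.
elim: r=> [|x r IH] //; rewrite in_cons big_cons => /orP [/eqP <-|mr] mB.
- by rewrite mB geq_minl.
- case: ifP=> _; last by apply: IH.
  by apply: leq_trans (geq_minr _ _) (IH mr mB).
Qed.

Lemma smin_min (B : {set T}) x : x \in B ->
  exists2 m, m \in B & (smin B = m /\ forall y, y \in B -> m <= y).
Proof.
move=> xB; case: (arg_minnP (fun i : T => val i) xB)=> m mB mmin.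
exists m=> //; split=> //; apply/eqP; rewrite eqn_leq; apply/andP; split.
- by apply: smin_le_seq=> //; rewrite mem_index_enum.
- rewrite /smin; apply: (big_ind (fun v => m <= v)).
  + by apply: ltnW.
  + by move=> u v h1 h2; rewrite leq_min h1 h2.
  + by move=> i iB; apply: mmin.
Qed.

Lemma gapped_smax (B C : {set T}) b c0 : gapped B C b -> c0 \in C -> smaxlt B (smin C) = b.
Proof.
move=> [Hb g] c0C; case: (smin_min c0C)=> m mC [-> mmin].
apply/eqP; rewrite eqn_leq; apply/andP; split.
- apply/bigmax_leqP=> i /andP [iB im]; rewrite leqNgt; apply/negP=> bi.
  case: (g m mC)=> _ h; have := h i iB bi; rewrite ltnNge => /negP; apply.
  by apply: ltnW.
- apply: (@leq_bigmax_cond _ _ _ b); rewrite Hb; by case: (g m mC).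
Qed.

Lemma gapped_smin (B C : {set T}) b c0 : gapped B C b -> c0 \in C -> smin B < smin C.
Proof.
move=> [Hb g] c0C; case: (smin_min c0C)=> m mC [-> mmin].
case: (smin_min Hb)=> m' m'B [-> m'min].
by apply: leq_ltn_trans (m'min _ Hb) _; case: (g m mC).
Qed.

Lemma nc_gapped (B C : {set T}) (b0 c0 : T) : b0 \in B -> c0 \in C -> (forall x, x \in B -> x \in C -> False) ->
  ~~ crossing B C -> smin B < smin C -> exists b, gapped B C b.
Proof.
move=> b0B c0C dis ncr lt.
case: (smin_min b0B)=> mB mBB [EB mBmin]; case: (smin_min c0C)=> mC mCC [EC mCmin].
rewrite EB EC in lt.
have P0 : (mB \in B) && (mB < mC) by rewrite mBB lt.
case: (@arg_maxnP _ mB (fun i : T => (i \in B) && (i < mC)) (fun i : T => val i) P0)=> a /andP [aB amC] amax.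
exists a; split=> // c cC; split; first by apply: leq_trans amC (mCmin c cC).
move=> b' b'B ab'.
have mCb' : mC < b'.
  rewrite ltn_neqAle; apply/andP; split.
  + apply/negP=> /eqP E; have E' : mC = b' by apply: val_inj.
    by apply: (dis b')=> //; rewrite -E'.
  + rewrite leqNgt; apply/negP=> h.
    have := amax b' (introT andP (conj b'B h)); rewrite /= leqNgt ab'.
    by [].
rewrite ltnNge; apply/negP=> b'c.
have : b' < c.
  rewrite ltn_neqAle b'c andbT; apply/negP=> /eqP E; have E' : b' = c by apply: val_inj.
  by apply: (dis b')=> //; rewrite E'.
move=> b'c'; move/negP: ncr; apply; apply/crossingP.
exists a, mC, b', c; split=> //.
Qed.


Lemma isNCP (P : PT) : isNC P <-> part P /\
  (forall B C, B \in P -> C \in P -> B != C -> ~~ crossing B C).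
Proof.
split.
- case/andP=> pP /forallP H; split=> // B C HB HC nBC.
  by have := H B; rewrite HB /= => /forallP /(_ C); rewrite HC nBC.
- case=> pP H; apply/andP; split=> //; apply/forallP=> B; apply/implyP=> HB.
  by apply/forallP=> C; apply/implyP=> HC; apply/implyP=> nBC; apply: H.
Qed.

Lemma part_disj (P : PT) B C : part P -> B \in P -> C \in P -> B != C ->
  forall x, x \in B -> x \in C -> False.
Proof. by move=> pP HB HC nBC x xB xC; rewrite (part_eq pP HB HC xB xC) eqxx in nBC. Qed.

Lemma cover_dec (P Q : PT) : coverNC P Q ->
  [/\ isNC P, isNC Q & exists B C b,
     [/\ B \in P, C \in P, B != C, gapped B C b & Q = mergeP P B C]].
Proof.
case/and3P=> nP nQ /existsP [B /andP [HB /existsP [C /andP [HC /andP [nBC /eqP EQ]]]]].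
split=> //; case/isNCP: (nP)=> pP ncP.
case: (part_ne pP HB)=> b0 b0B; case: (part_ne pP HC)=> c0 c0C.
case: (smin_min b0B)=> mB mBB [EB _]; case: (smin_min c0C)=> mC mCC [EC _].
case: (ltngtP (smin B) (smin C))=> h.
- case: (nc_gapped b0B c0C (part_disj pP HB HC nBC) (ncP _ _ HB HC nBC) h)=> b g.
  by exists B, C, b.
- rewrite eq_sym in nBC.
  case: (nc_gapped c0C b0B (part_disj pP HC HB nBC) (ncP _ _ HC HB nBC) h)=> b g.
  by exists C, B, b; rewrite mergeC.
- rewrite EB EC in h; have E : mB = mC by apply: val_inj.
  by case: (part_disj pP HB HC nBC mBB); rewrite E.
Qed.

Lemma lam_merge (P : PT) B C b : part P -> B \in P -> C \in P -> B != C ->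
  gapped B C b -> lamNC P (mergeP P B C) = b.
Proof.
move=> pP HB HC nBC g; case: (part_ne pP HC)=> c0 c0C.
rewrite /lamNC; case: pickP=> [[B' C'] /= | H].
- case/and5P=> HB' HC' nBC' /eqP E lt.
  case: (merge_inj pP HB HC nBC HB' HC' nBC' E)=> [[<- <-]|[E1 E2]].
  + by apply: (gapped_smax g c0C).
  + have := gapped_smin g c0C; rewrite E1 E2 => h.
    by move: (ltn_trans h lt); rewrite ltnn.
- have := H (B, C); rewrite /= HB HC nBC eqxx (gapped_smin g c0C).
  by [].
Qed.

Lemma gapped_cover (P : PT) B C b : isNC P -> isNC (mergeP P B C) -> B \in P -> C \in P ->
  B != C -> gapped B C b -> coverNC P (mergeP P B C).
Proof.
move=> nP nQ HB HC nBC g; apply/and3P; split=> //.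
apply/existsP; exists B; rewrite HB /=; apply/existsP; exists C.
by rewrite HC nBC eqxx.
Qed.


Lemma notin_neq (P : PT) (X Y : {set T}) : X \in P -> Y \notin P -> (X == Y) = false.
Proof. by move=> HX HY; apply/negP=> /eqP E; rewrite -E HX in HY. Qed.

Lemma sup2_notin (P : PT) (X Y U : {set T}) : part P -> X \in P -> Y \in P -> X != Y ->
  X \subset U -> Y \subset U -> U \notin P.
Proof.
move=> pP HX HY nXY /subsetP sX /subsetP sY; apply/negP=> HU.
case: (part_ne pP HX)=> x xX; case: (part_ne pP HY)=> y yY.
have E1 := part_eq pP HX HU xX (sX x xX); have E2 := part_eq pP HY HU yY (sY y yY).
by rewrite E1 E2 eqxx in nXY.
Qed.

Lemma merge3_mem (P : PT) (X Y Z W : {set T}) : part P -> X \in P -> Y \in P -> Z \in P ->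
  X != Y -> X != Z -> Y != Z ->
  (W \in mergeP (mergeP P X Y) (X :|: Y) Z) =
  ((W \in P) && (W != X) && (W != Y) && (W != Z)) || (W == X :|: Y :|: Z).
Proof.
move=> pP HX HY HZ nXY nXZ nYZ.
have nU := BC_notin pP HX HY nXY.
have nU3 : X :|: Y :|: Z \notin P.
  apply: (sup2_notin pP HX HY nXY); apply/subsetP=> x xin; by rewrite !inE xin ?orbT.
rewrite !merge_mem.
case HW: (W \in P).
- by rewrite (notin_neq HW nU) (notin_neq HW nU3) /= !orbF andbT.
- by rewrite /=; case: (W == X :|: Y).
Qed.

Lemma merge22_mem (P : PT) (X Y U V W : {set T}) : part P -> X \in P -> Y \in P -> U \in P -> V \in P ->
  X != Y -> U != V -> X != U -> X != V -> Y != U -> Y != V ->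
  (W \in mergeP (mergeP P X Y) U V) =
  [|| (W \in P) && (W != X) && (W != Y) && (W != U) && (W != V), (W == X :|: Y) | (W == U :|: V)].
Proof.
move=> pP HX HY HU HV nXY nUV nXU nXV nYU nYV.
have nU1 := BC_notin pP HX HY nXY.
have nU2 := BC_notin pP HU HV nUV.
have E1 : (X :|: Y == U) = false by rewrite eq_sym (notin_neq HU nU1).
have E2 : (X :|: Y == V) = false by rewrite eq_sym (notin_neq HV nU1).
rewrite !merge_mem.
case HW: (W \in P).
- by rewrite (notin_neq HW nU1) (notin_neq HW nU2) /= !orbF.
- rewrite /=; case: (eqVneq W (X :|: Y))=> [->|] //=.
  by rewrite E1 E2.
Qed.


Lemma NC_merge (P : PT) B C : isNC P -> B \in P -> C \in P -> B != C ->
  (forall G, G \in P -> G != B -> G != C ->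
     ~~ crossing (B :|: C) G /\ ~~ crossing G (B :|: C)) ->
  isNC (mergeP P B C).
Proof.
move=> nP HB HC nBC H; case/isNCP: nP=> pP ncP; apply/isNCP; split; first exact: merge_part.
move=> X Y; rewrite !merge_mem.
case/orP=> [/andP [/andP [HX h1] h2]|/eqP ->];
  case/orP=> [/andP [/andP [HY h3] h4]|/eqP ->] nXY.
- by apply: ncP.
- by case: (H X HX h1 h2).
- by case: (H Y HY h3 h4).
- by rewrite eqxx in nXY.
Qed.

Lemma nc_sub (Q : PT) (X Y X' Y' : {set T}) : isNC Q -> X' \in Q -> Y' \in Q -> X' != Y' ->
  X \subset X' -> Y \subset Y' -> ~~ crossing X Y.
Proof.
case/isNCP=> _ ncQ HX HY nXY sX sY; apply/negP=> cr.
by move/negP: (ncQ _ _ HX HY nXY); apply; apply: crossing_mono cr sX sY.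
Qed.

Lemma subUl (X Y : {set T}) : X \subset X :|: Y.
Proof. by apply/subsetP=> x xX; rewrite inE xX. Qed.
Lemma subUr (X Y : {set T}) : Y \subset X :|: Y.
Proof. by apply/subsetP=> x xX; rewrite inE xX orbT. Qed.

End Part.

Section Sw.
Variable n : nat.
Local Notation T := ('I_n).
Local Notation PT := {set {set T}}.

Lemma switch (P P1 P2 : PT) : coverNC P P1 -> coverNC P1 P2 -> lamNC P P1 < lamNC P1 P2 ->
  exists P', [/\ coverNC P P', coverNC P' P2, lamNC P P' = lamNC P1 P2 &
                 lamNC P' P2 = lamNC P P1].
Proof.
case/cover_dec=> nP nP1 [B1 [C1 [a [HB1 HC1 n1 g1 E1]]]].
case/cover_dec=> _ nP2 [B2 [C2 [b [HB2 HC2 n2 g2 E2]]]].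
have pP : part P by case/isNCP: nP.
have pP1 : part P1 by case/isNCP: nP1.
rewrite E2 (lam_merge pP1 HB2 HC2 n2 g2) E1 (lam_merge pP HB1 HC1 n1 g1) => ab.
have nU2 := BC_notin pP1 HB2 HC2 n2.
rewrite E1 in HB2 HC2 pP1 nP1 nU2; rewrite E1 in E2; rewrite -E2 in nP2 *; clear E1 P1.
have pP2 : part P2 by case/isNCP: nP2.
set D := B1 :|: C1 in HB2 HC2 E2 pP1 nP1 nU2 *.
have DP1 : D \in mergeP P B1 C1 by rewrite merge_mem eqxx orbT.
have nD : D \notin P by apply: BC_notin.
have UP2 : B2 :|: C2 \in P2 by rewrite E2 merge_mem eqxx orbT.
move: HB2 HC2; rewrite !merge_mem.
case/orP=> [/andP [/andP [HB2 b21] b22] | /eqP eB2];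
  case/orP=> [/andP [/andP [HC2 c21] c22] | /eqP eC2].
-
  have DP2 : D \in P2.
    rewrite E2 merge_mem DP1 /=; apply/orP; left.
    by rewrite eq_sym (notin_neq HB2 nD) eq_sym (notin_neq HC2 nD).
  have nDU : D != B2 :|: C2 by rewrite (notin_neq DP1 nU2).
  set P' := mergeP P B2 C2.
  have nP' : isNC P'.
    apply: NC_merge=> // G HG h1 h2.
    case: (boolP ((G == B1) || (G == C1)))=> [hG|].
    + have sG : G \subset D by case/orP: hG=> /eqP ->; [apply: subUl | apply: subUr].
      split; [apply: (nc_sub nP2 UP2 DP2)|apply: (nc_sub nP2 DP2 UP2)];
        rewrite ?subxx // eq_sym //.
    + rewrite negb_or => /andP [h3 h4].
      have GP1 : G \in mergeP P B1 C1 by rewrite merge_mem HG h3 h4.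
      have GP2 : G \in P2 by rewrite E2 merge_mem GP1 h1 h2.
      have nGU : G != B2 :|: C2 by rewrite (notin_neq GP1 nU2).
      split; [apply: (nc_sub nP2 UP2 GP2)|apply: (nc_sub nP2 GP2 UP2)];
        rewrite ?subxx // eq_sym //.
  have pP' : part P' by case/isNCP: nP'.
  have HB1' : B1 \in P' by rewrite merge_mem HB1 eq_sym b21 eq_sym c21.
  have HC1' : C1 \in P' by rewrite merge_mem HC1 eq_sym b22 eq_sym c22.
  have EP2 : P2 = mergeP P' B1 C1.
    apply/setP=> W; rewrite E2 !merge22_mem // ?(eq_sym B1) ?(eq_sym C1) //.
    by case: (W \in P); case: (W == B1); case: (W == C1); case: (W == B2); case: (W == C2);
       case: (W == B1 :|: C1); case: (W == B2 :|: C2).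
  exists P'; split.
  + exact: (gapped_cover nP nP' HB2 HC2 n2 g2).
  + by rewrite EP2; apply: (gapped_cover nP' _ HB1' HC1' n1 g1); rewrite -EP2.
  + exact: (lam_merge pP HB2 HC2 n2 g2).
  + by rewrite EP2; apply: (lam_merge pP' HB1' HC1' n1 g1).
-
  case: g2=> _ h; have := (h a); rewrite eC2 inE; case: g1=> -> _ /(_ isT) [ba _].
  by move: (ltn_trans ab ba); rewrite ltnn.
-
  rewrite eB2 in g2 E2 n2 UP2 nU2; clear eB2 B2.
  have nDE : D :|: C2 \notin P.
    apply: (sup2_notin pP HB1 HC2); first by rewrite eq_sym.
    + by apply/subsetP=> x xB; rewrite !inE xB.
    + exact: subUr.
  have other : forall S G : {set T}, S \subset D :|: C2 -> G \in P -> G != B1 -> G != C1 -> G != C2 ->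
      ~~ crossing S G /\ ~~ crossing G S.
    move=> S G sS HG h1 h2 h3.
    have GP1 : G \in mergeP P B1 C1 by rewrite merge_mem HG h1 h2.
    have GP2 : G \in P2 by rewrite E2 merge_mem GP1 h3 (notin_neq HG nD).
    have nGU : G != D :|: C2 by rewrite (notin_neq GP1 nU2).
    split; [apply: (nc_sub nP2 UP2 GP2)|apply: (nc_sub nP2 GP2 UP2)];
      rewrite ?subxx // eq_sym //.
  case: (g2)=> bD g2'.
  have nC1E : C1 != C2 by rewrite eq_sym.
  have nB1E : B1 != C2 by rewrite eq_sym.
  move: bD; rewrite inE=> /orP [bB1|bC1].
  +
    have g' : gapped B1 C2 b.
      split=> // e eE; case: (g2' e eE)=> h1 h2; split=> // b' b'B1 bb'.
      by apply: h2=> //; rewrite inE b'B1.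
    have g'' : gapped (B1 :|: C2) C1 a.
      case: g1=> aB1 g1'; split; first by rewrite inE aB1.
      move=> c cC1; case: (g1' c cC1)=> h1 h2; split=> // x; rewrite inE=> /orP [xB1|xE] ax.
      * by apply: h2.
      * have cb : c < b by apply: h2.
        by apply: (ltn_trans cb); case: (g2' x xE).
    set P' := mergeP P B1 C2.
    have nP' : isNC P'.
      apply: NC_merge=> // G HG h1 h2.
      case: (eqVneq G C1)=> [->|h3].
      * by case: (gapped_nc g'')=> ? ?; split.
      * apply: other=> //; apply/subsetP=> x; rewrite !inE=> /orP [->|->]; by rewrite ?orbT.
    have pP' : part P' by case/isNCP: nP'.
    have HU' : B1 :|: C2 \in P' by rewrite merge_mem eqxx orbT.
    have HC1' : C1 \in P' by rewrite merge_mem HC1 eq_sym n1 nC1E.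
    have nUC : B1 :|: C2 != C1 by rewrite eq_sym (notin_neq HC1 (BC_notin pP HB1 HC2 nB1E)).
    have EP2 : P2 = mergeP P' (B1 :|: C2) C1.
      apply/setP=> W; rewrite E2 /D /P' !merge3_mem //.
      have -> : B1 :|: C2 :|: C1 = D :|: C2.
        by apply/setP=> x; rewrite !inE; case: (x \in B1); case: (x \in C1); case: (x \in C2).
      by case: (W \in P); case: (W == B1); case: (W == C1); case: (W == C2).
    exists P'; split.
    * exact: (gapped_cover nP nP' HB1 HC2 nB1E g').
    * by rewrite EP2; apply: (gapped_cover nP' _ HU' HC1' nUC g''); rewrite -EP2.
    * exact: (lam_merge pP HB1 HC2 nB1E g').
    * by rewrite EP2; apply: (lam_merge pP' HU' HC1' nUC g'').
  +
    have g' : gapped C1 C2 b.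
      split=> // e eE; case: (g2' e eE)=> h1 h2; split=> // b' b'C1 bb'.
      by apply: h2=> //; rewrite inE b'C1 orbT.
    have g'' : gapped B1 (C1 :|: C2) a.
      case: g1=> aB1 g1'; split=> //.
      move=> x; rewrite inE=> /orP [xC1|xE].
      * exact: g1'.
      * case: (g2' x xE)=> bx h2; split; first exact: ltn_trans ab bx.
        move=> b' b'B1 ab'; apply: h2; first by rewrite inE b'B1.
        by case: (g1' b bC1)=> _; apply.
    set P' := mergeP P C1 C2.
    have nP' : isNC P'.
      apply: NC_merge=> // G HG h1 h2.
      case: (eqVneq G B1)=> [->|h3].
      * by case: (gapped_nc g'')=> ? ?; split.
      * apply: other=> //; apply/subsetP=> x; rewrite !inE=> /orP [->|->]; by rewrite ?orbT.
    have pP' : part P' by case/isNCP: nP'.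
    have HU' : C1 :|: C2 \in P' by rewrite merge_mem eqxx orbT.
    have HB1' : B1 \in P' by rewrite merge_mem HB1 n1 nB1E.
    have nBU : B1 != C1 :|: C2 by rewrite (notin_neq HB1 (BC_notin pP HC1 HC2 nC1E)).
    have EP2 : P2 = mergeP P' B1 (C1 :|: C2).
      apply/setP=> W; rewrite E2 /D /P' (mergeC (mergeP P C1 C2)) !merge3_mem //; last by rewrite eq_sym.
      have -> : C1 :|: C2 :|: B1 = D :|: C2.
        by apply/setP=> x; rewrite !inE; case: (x \in B1); case: (x \in C1); case: (x \in C2).
      by case: (W \in P); case: (W == B1); case: (W == C1); case: (W == C2).
    exists P'; split.
    * exact: (gapped_cover nP nP' HC1 HC2 nC1E g').
    * by rewrite EP2; apply: (gapped_cover nP' _ HB1' HU' nBU g''); rewrite -EP2.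
    * exact: (lam_merge pP HC1 HC2 nC1E g').
    * by rewrite EP2; apply: (lam_merge pP' HB1' HU' nBU g'').
- by rewrite eB2 eC2 eqxx in n2.
Qed.
End Sw.

Section Dyck.
Variable n : nat.
Local Notation T := ('I_n).
Local Notation PT := {set {set T}}.
Implicit Types (S B C D : {set T}) (e : {ffun T -> nat}).

Definition cnt (S : {set T}) (t : nat) := \sum_(a in S | a < t) 1.
Definition sm (e : {ffun T -> nat}) (S : {set T}) (t : nat) := \sum_(a in S | a < t) e a.
Definition Dy (S : {set T}) (e : {ffun T -> nat}) :=
  \sum_(a in S) e a = #|S| - 1 /\ forall t, cnt S t < #|S| -> cnt S t <= sm e S t.

Lemma sumU (B C : {set T}) (P : pred T) (F : T -> nat) :
  (forall x, x \in B -> x \in C -> False) ->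
  \sum_(a in B :|: C | P a) F a = \sum_(a in B | P a) F a + \sum_(a in C | P a) F a.
Proof.
move=> dis; rewrite (big_setIDcond _ _ B); congr (_ + _); apply: eq_bigl=> i; rewrite !inE.
- by case: (i \in B); rewrite ?andbF.
- case iB: (i \in B); case iC: (i \in C)=> //=.
  by case: (dis i iB iC).
Qed.

Lemma sumU0 (B C : {set T}) (F : T -> nat) :
  (forall x, x \in B -> x \in C -> False) ->
  \sum_(a in B :|: C) F a = \sum_(a in B) F a + \sum_(a in C) F a.
Proof. by move=> dis; have := sumU (fun _ => true) F dis; rewrite !big_condT. Qed.

Lemma card_split (S : {set T}) t :
  #|S| = cnt S t + \sum_(a in S | ~~ (a < t)) 1.
Proof. by rewrite -sum1_card /cnt (bigID (fun a : T => a < t)). Qed.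

Lemma sum_split (e : {ffun T -> nat}) (S : {set T}) t :
  \sum_(a in S) e a = sm e S t + \sum_(a in S | ~~ (a < t)) e a.
Proof. by rewrite /sm (bigID (fun a : T => a < t)). Qed.

Lemma cnt_le S t : cnt S t <= #|S|.
Proof. by rewrite (card_split S t) leq_addr. Qed.

Lemma cnt_lt S t x : x \in S -> ~~ (x < t) -> cnt S t < #|S|.
Proof.
move=> xS xt; rewrite (card_split S t) -addn1 leq_add2l.
by rewrite (bigD1 x) //= ?xS.
Qed.

Lemma cnt_full S t : cnt S t = #|S| -> forall x, x \in S -> x < t.
Proof.
move=> E x xS; apply/negPn/negP=> h.
by move: (cnt_lt xS h); rewrite E ltnn.
Qed.

Lemma cnt_all S t : (forall x, x \in S -> x < t) -> cnt S t = #|S| /\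
  forall e, sm e S t = \sum_(a in S) e a.
Proof.
move=> H; split.
- rewrite (card_split S t) big_pred0 ?addn0 // => x.
  by apply/andP=> [[xS]]; rewrite (H x xS).
- move=> e; rewrite (sum_split e S t) big_pred0 ?addn0 // => x.
  by apply/andP=> [[xS]]; rewrite (H x xS).
Qed.

Lemma cnt_none S t : (forall x, x \in S -> ~~ (x < t)) -> cnt S t = 0 /\
  forall e, sm e S t = 0.
Proof.
move=> H; split.
- rewrite /cnt big_pred0 // => x; apply/andP=> [[xS]].
  by rewrite (negbTE (H x xS)).
- move=> e; rewrite /sm big_pred0 // => x; apply/andP=> [[xS]].
  by rewrite (negbTE (H x xS)).
Qed.

Lemma Dy_le1 S e t : Dy S e -> cnt S t <= (sm e S t).+1.
Proof.
case=> tot pre; case: (ltngtP (cnt S t) #|S|)=> h.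
- by apply: leq_trans (pre t h) _.
- by move: (cnt_le S t); rewrite leqNgt h.
- have all := cnt_full h; case: (cnt_all all)=> _ ->; rewrite tot h.
  lia.
Qed.

Lemma Dy_eq S e e' : (forall x, x \in S -> e x = e' x) -> Dy S e -> Dy S e'.
Proof.
move=> E [tot pre]; split.
- by rewrite -tot; apply: eq_bigr=> x xS; rewrite E.
- move=> t h; rewrite /sm -(eq_bigr _ (fun x xS => E x (proj1 (andP xS)))).
  exact: pre.
Qed.

Definition bump (e : {ffun T -> nat}) (b : T) : {ffun T -> nat} :=
  [ffun x => if x == b then (e x).+1 else e x].

Lemma sum_bump e b (S : {set T}) (P : pred T) :
  \sum_(a in S | P a) bump e b a = \sum_(a in S | P a) e a + ((b \in S) && P b).
Proof.
case: (boolP ((b \in S) && P b))=> h.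
- rewrite (bigD1 b h) (bigD1 b h) /= /bump ffunE eqxx addn1 addSn; congr (_ + _).+1.
  by apply: eq_bigr=> i /andP [_ ni]; rewrite ffunE (negbTE ni).
- rewrite addn0; apply: eq_bigr=> i iSP; rewrite ffunE.
  case: eqP=> // E; by rewrite -E iSP in h.
Qed.

Lemma Dy_merge (B C : {set T}) b c0 e : Dy B e -> Dy C e -> gapped B C b -> c0 \in C ->
  (forall x, x \in B -> x \in C -> False) -> Dy (B :|: C) (bump e b).
Proof.
move=> [totB preB] [totC preC] [bB g] c0C dis.
have cardU : #|B :|: C| = #|B| + #|C| by rewrite -!sum1_card sumU0.
have B0 : 0 < #|B| by apply/card_gt0P; exists b.
have C0 : 0 < #|C| by apply/card_gt0P; exists c0.
have bC : b \notin C by apply/negP=> bC; apply: (dis b).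
split.
- have := sum_bump e b (B :|: C) (fun _ => true); rewrite !big_condT andbT inE bB /= => ->.
  rewrite sumU0 // totB totC cardU; lia.
- move=> t; rewrite cardU /cnt /sm sum_bump sumU // sumU // inE bB /= -/(cnt B t) -/(cnt C t)
    -/(sm e B t) -/(sm e C t) => h.
  case: (leqP t b)=> tb.
  + have nC : forall x, x \in C -> ~~ (x < t).
      by move=> x xC; rewrite -leqNgt; apply: leq_trans tb (ltnW (proj1 (g x xC))).
    case: (cnt_none nC)=> E1 E2; rewrite E1 E2.
    have : cnt B t <= sm e B t by apply: preB; apply: (cnt_lt bB); rewrite -leqNgt.
    lia.
  + rewrite ?tb.
    case: (boolP [forall x in C, x < t]).
    * move/forall_inP=> allC; case: (cnt_all allC)=> E1 E2; rewrite E1 E2 totC; rewrite E1 in h.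
      have hB : cnt B t < #|B| by move: h; rewrite ltn_add2r.
      have := preB t hB; rewrite /nat_of_bool; lia.
    * rewrite negb_forall_in => /existsP [c /andP [cC ct]].
      have EB : forall F : T -> nat, \sum_(a in B | a < t) F a = \sum_(a in B | a < b.+1) F a.
        move=> F; apply: eq_bigl=> a; case aB: (a \in B)=> //=.
        rewrite ltnS; apply/idP/idP=> ha.
        - rewrite leqNgt; apply/negP=> ba; have := (proj2 (g c cC)) a aB ba.
          move=> ca; move: ct; rewrite -leqNgt => tc.
          by move: (leq_ltn_trans tc ca); rewrite ltnNge (ltnW ha).
        - by apply: leq_ltn_trans ha tb.
      have h1 := @Dy_le1 B e b.+1 (conj totB preB).
      have h2 : cnt C t <= sm e C t by apply: preC; apply: (cnt_lt cC).
      move: h1; rewrite /cnt /sm -!EB -/(cnt B t) -/(sm e B t) => h1.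
      rewrite /nat_of_bool -/(cnt C t) -/(sm e C t); lia.
Qed.


Definition decf (e : {ffun T -> nat}) (b : T) : {ffun T -> nat} :=
  [ffun x => if x == b then (e x).-1 else e x].

Lemma bump_dec e b : 0 < e b -> bump (decf e b) b = e.
Proof.
move=> h; apply/ffunP=> x; rewrite !ffunE; case: eqP=> // ->.
by rewrite prednK.
Qed.

Lemma dec_bump e b : decf (bump e b) b = e.
Proof. by apply/ffunP=> x; rewrite !ffunE; case: eqP=> // ->; rewrite eqxx. Qed.

Lemma sum_dec e b (S : {set T}) (P : pred T) : 0 < e b ->
  \sum_(a in S | P a) decf e b a + ((b \in S) && P b) = \sum_(a in S | P a) e a.
Proof. by move=> h; rewrite -sum_bump bump_dec. Qed.

Lemma sum_D1 (D : {set T}) c (P : pred T) (F : T -> nat) : c \in D ->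
  \sum_(x in D | P x) F x = (if P c then F c else 0) + \sum_(x in D :\ c | P x) F x.
Proof.
move=> cD; rewrite -{1}(setD1K cD) sumU.
- by rewrite big_mkcondr big_set1.
- by move=> x; rewrite !inE => /eqP -> /andP [/negP].
Qed.

Lemma Dy_split D e a c : Dy D e -> a \in D -> 0 < e a ->
  (forall x, x \in D -> a < x -> e x = 0) -> c \in D -> a < c ->
  Dy (D :\ c) (decf e a) /\ Dy [set c] (decf e a).
Proof.
move=> [tot pre] aD ea zero cD ac.
have ec : e c = 0 by apply: zero.
have nac : (c == a) = false by apply/negP=> /eqP E; rewrite E ltnn in ac.
have aD' : a \in D :\ c by rewrite !inE aD andbT; apply/negP=> /eqP E; rewrite E ltnn in ac.
have cardD : #|D| = #|D :\ c|.+1 by rewrite (cardsD1 c D) cD.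
split; last first.
- split.
  + by rewrite big_set1 ffunE nac ec cards1.
  + by move=> t; rewrite cards1 ltnS leqn0 => /eqP ->.
split.
- have := sum_dec (D :\ c) (fun _ => true) ea; rewrite !big_condT aD' /=.
  have := sum_D1 (fun _ => true) e cD; rewrite !big_condT /= ec add0n.
  move=> <-; rewrite tot cardD subn1 /= => E; by rewrite -E addnK.
- move=> t h.
  have E1 := sum_D1 (fun x : T => x < t) (fun _ => 1) cD.
  have E2 := sum_D1 (fun x : T => x < t) e cD.
  have E3 := sum_dec (D :\ c) (fun x : T => x < t) ea.
  rewrite -/(cnt D t) -/(cnt (D :\ c) t) in E1.
  rewrite -/(sm e D t) -/(sm e (D :\ c) t) in E2.
  rewrite -/(sm e (D :\ c) t) -/(sm (decf e a) (D :\ c) t) aD' /= in E3.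
  rewrite ec in E2.
  case: (leqP t a)=> ta.
  + have ct : (c < t) = false by apply/negP=> ct; move: (leq_trans ct ta); by rewrite ltnNge (ltnW ac).
    have at' : (a < t) = false by rewrite ltnNge ta.
    rewrite ct in E1 E2; rewrite at' in E3.
    have hD : cnt D t < #|D| by apply: (cnt_lt aD); rewrite at'.
    have := pre t hD; lia.
  + rewrite ta in E3.
    have hs : sm e D t = #|D| - 1.
      rewrite -tot (sum_split e D t) big1 ?addn0 // => x /andP [xD xt].
      by apply: zero=> //; apply: leq_trans ta _; rewrite leqNgt.
    move: E1 E2; case: (c < t)=> E1 E2; lia.
Qed.

Lemma Dy_sub B C C' a e c0 : gapped B C a -> c0 \in C ->
  (forall x, x \in C -> x \in C') -> (forall x, x \in C' -> x \in B :|: C) ->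
  (forall x, x \in C' -> a < x) -> Dy C e -> Dy C' e ->
  forall x, x \in C' -> x \in C.
Proof.
move=> [aB g] c0C sub sub' aC' [totC preC] [totC' preC'] x xC'.
apply/negPn/negP=> xnC.
have P0 : (x \in C') && (x \notin C) by rewrite xC' xnC.
case: (@arg_minnP _ x (fun y : T => (y \in C') && (y \notin C)) (fun y : T => val y) P0)
  => x' /andP [x'C' x'nC] x'min.
have x'B : x' \in B by move: (sub' x' x'C'); rewrite inE (negbTE x'nC) orbF.
have Cx' : forall c, c \in C -> c < x'.
  by move=> c cC; apply: (proj2 (g c cC)) x' x'B (aC' x' x'C').
have EC : forall F : T -> nat, \sum_(y in C' | y < x') F y = \sum_(y in C) F y.
  move=> F; apply: eq_bigl=> y; case yC: (y \in C).
  - by rewrite (sub y yC) (Cx' y yC).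
  - case yC': (y \in C')=> //=; apply/negP=> yx.
    have := x'min y; rewrite yC' yC /= => /(_ isT); rewrite leqNgt yx.
    by [].
have h1 : cnt C' x' = #|C| by rewrite /cnt EC sum1_card.
have h2 : sm e C' x' = #|C| - 1 by rewrite /sm EC totC.
have hlt : cnt C' x' < #|C'| by apply: (cnt_lt x'C'); rewrite ltnn.
have := preC' x' hlt; rewrite h1 h2.
have : 0 < #|C| by apply/card_gt0P; exists c0.
move=> h3 h4; move: h3 h4; clear; lia.
Qed.

Lemma Dy_unique B C B' C' a e c0 c0' : gapped B C a -> gapped B' C' a ->
  B :|: C = B' :|: C' -> c0 \in C -> c0' \in C' -> Dy C e -> Dy C' e -> C = C'.
Proof.
move=> g g' EU c0C c0C' DC DC'.
have sC : forall x, x \in C -> x \in B' :|: C' by move=> x xC; rewrite -EU inE xC orbT.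
have sC' : forall x, x \in C' -> x \in B :|: C by move=> x xC; rewrite EU inE xC orbT.
have aC : forall x, x \in C -> a < x by move=> x xC; case: (proj2 g x xC).
have aC' : forall x, x \in C' -> a < x by move=> x xC; case: (proj2 g' x xC).
have sub : (forall x, x \in C -> x \in C') -> C = C'.
  move=> s; apply/setP=> x; apply/idP/idP; first exact: s.
  exact: (Dy_sub g c0C s sC' aC' DC DC').
case: (boolP [forall x in C, x \in C']).
- by move/forall_inP.
- rewrite negb_forall_in => /existsP [x /andP [xC xnC']].
  have xB' : x \in B' by move: (sC x xC); rewrite inE (negbTE xnC') orbF.
  have s' : forall y, y \in C' -> y \in C.
    move=> y yC'; apply/negPn/negP=> ynC.
    have yB : y \in B by move: (sC' y yC'); rewrite inE (negbTE ynC) orbF.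
    have l1 : y < x by apply: (proj2 (proj2 g' y yC')) x xB' (aC x xC).
    have l2 : x < y by apply: (proj2 (proj2 g x xC)) y yB (aC' y yC').
    by move: (ltn_trans l1 l2); rewrite ltnn.
  symmetry; apply/setP=> y; apply/idP/idP; first exact: s'.
  exact: (Dy_sub g' c0C' s' sC aC DC' DC).
Qed.

Lemma isDyckP S e : isDyck S e <-> Dy S e.
Proof.
have Ecard : forall t, #|[set a in S | a <= t]| = cnt S t.+1.
  by move=> t; rewrite /cnt sum1dep_card; apply: eq_card=> x; rewrite !inE ?ltnS.
split.
- case/andP=> /eqP tot /forall_inP pre; split=> // t h.
  case: (boolP [exists x in S, x < t]).
  + case/exists_inP=> x0 x0S x0t.
    have P0 : (x0 \in S) && (x0 < t) by rewrite x0S x0t.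
    case: (@arg_maxnP _ x0 (fun y : T => (y \in S) && (y < t)) (fun y : T => val y) P0)
      => m /andP [mS mt] mmax.
    have E : forall F : T -> nat, \sum_(a in S | a < t) F a = \sum_(a in S | a <= m) F a.
      move=> F; apply: eq_bigl=> y; case yS: (y \in S)=> //=.
      apply/idP/idP=> hy.
      * by apply: (mmax y); rewrite yS hy.
      * by apply: leq_ltn_trans hy mt.
    have := pre m mS; rewrite Ecard.
    rewrite /cnt /sm !E -/(cnt S m.+1) in h *.
    have Ecnt : \sum_(a in S | a <= m) 1 = cnt S m.+1.
      by rewrite /cnt; apply: eq_bigl=> y; rewrite ltnS.
    by move/implyP; apply.
  + rewrite negb_exists_in => /forall_inP H.
    by case: (cnt_none H)=> ->.
- case=> tot pre; apply/andP; split; first by apply/eqP.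
  apply/forall_inP=> b bS; rewrite Ecard; apply/implyP=> h.
  have := pre _ h; rewrite /sm.
  have -> : \sum_(a in S | a < b.+1) e a = \sum_(a in S | a <= b) e a.
    by apply: eq_bigl=> y; rewrite ltnS.
  by [].
Qed.

End Dyck.

Section Chains.
Variable n : nat.
Local Notation T := ('I_n).
Local Notation PT := {set {set T}}.
Local Notation z := (zNC n).
Local Notation cov := (@coverNC n).
Local Notation lam := (@lamNC n).
Implicit Types (S B C D : {set T}) (e : {ffun T -> nat}) (s t : seq PT).

Definition labs s := pairmap lam z s.
Definition cntf s : {ffun T -> nat} := [ffun a => count_mem (val a) (labs s)].
Definition PhiR s := (last z s, cntf s).

Lemma labs_rcons s y : labs (rcons s y) = rcons (labs s) (lam (last z s) y).
Proof. by rewrite /labs -!cats1 pairmap_cat. Qed.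

Lemma cntf_rcons s y b : lam (last z s) y = val b -> cntf (rcons s y) = bump (cntf s) b.
Proof.
move=> E; apply/ffunP=> x; rewrite !ffunE labs_rcons -cats1 count_cat /= E addn0.
rewrite (inj_eq val_inj); case: eqP=> [->|]; first by rewrite eqxx addn1.
by move=> /eqP; rewrite eq_sym => /negbTE ->; rewrite addn0.
Qed.

Lemma zNC_part : part z.
Proof.
apply/partP; split.
- apply/negP=> /imsetP [x _] E.
  have : x \in (set0 : {set T}) by rewrite E inE.
  by rewrite inE.
- by move=> x; exists [set x]; [apply: imset_f | rewrite inE].
- move=> X Y x /imsetP [a _ ->] /imsetP [b _ ->]; rewrite !inE => /eqP -> /eqP ->.
  by [].
Qed.

Lemma zNC_NC : isNC z.
Proof.
apply/isNCP; split; first exact: zNC_part.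
move=> B C /imsetP [a _ ->] /imsetP [b _ ->] _.
apply/negP=> /crossingP [x1 [x2 [x3 [x4 [h1 h2 h3 [h4 h5 _ _]]]]]].
move: h4 h5; rewrite !inE => /eqP E1 /eqP E2.
by move: (ltn_trans h1 h2); rewrite E1 E2 ltnn.
Qed.

Lemma zNC_NCD : isNCD (z, [ffun _ => 0]).
Proof.
apply/andP; split; first exact: zNC_NC.
apply/forall_inP=> B /imsetP [a _ ->]; apply/isDyckP; split.
- by rewrite big_set1 ffunE cards1.
- by move=> t; rewrite cards1 ltnS leqn0 => /eqP ->.
Qed.

Lemma isNCDP (F : PT * {ffun T -> nat}) :
  isNCD F <-> isNC F.1 /\ forall B, B \in F.1 -> Dy B F.2.
Proof.
split.
- case/andP=> h /forall_inP H; split=> // B HB; apply/isDyckP; exact: H.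
- case=> h H; apply/andP; split=> //; apply/forall_inP=> B HB; apply/isDyckP; exact: H.
Qed.

Lemma NCD_step P e Q : isNCD (P, e) -> cov P Q ->
  exists b : T, lam P Q = b /\ isNCD (Q, bump e b).
Proof.
move=> /isNCDP [nP DP] /cover_dec [_ nQ [B [C [b [HB HC nBC g EQ]]]]].
have pP : part P by case/isNCP: nP.
exists b; split; first by rewrite EQ; apply: lam_merge.
apply/isNCDP; split=> //= X; rewrite EQ merge_mem.
case/orP=> [/andP [/andP [HX h1] h2]|/eqP ->].
- apply: Dy_eq (DP X HX)=> x xX; rewrite ffunE; case: eqP=> // E.
  by case: (part_disj pP HB HX _ (proj1 g)); rewrite 1?eq_sym // -E.
- case: (part_ne pP HC)=> c0 c0C.
  exact: (Dy_merge (DP B HB) (DP C HC) g c0C (part_disj pP HB HC nBC)).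
Qed.

Lemma Phi_NCD s : path cov z s -> isNCD (PhiR s).
Proof.
elim/last_ind: s=> [|s y IH].
- move=> _; rewrite /PhiR /=.
  have -> : cntf [::] = [ffun _ => 0] by apply/ffunP=> x; rewrite !ffunE.
  exact: zNC_NCD.
- rewrite rcons_path => /andP [ps cy].
  case: (NCD_step (IH ps) cy)=> b [Eb H].
  by rewrite /PhiR last_rcons (cntf_rcons Eb).
Qed.

Lemma unmerge (P : PT) B C : part P -> B \in P -> C \in P -> B != C ->
  P = (mergeP P B C :\ (B :|: C)) :|: [set B; C].
Proof.
move=> pP HB HC nBC; have nU := BC_notin pP HB HC nBC.
apply/setP=> W; rewrite in_setU in_setD1 merge_mem in_set2.
case HW: (W \in P).
- case: (eqVneq W B)=> [->|h1]; first by rewrite ?eqxx /= ?orbT.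
  case: (eqVneq W C)=> [->|h2]; first by rewrite ?eqxx /= ?orbT.
  by rewrite (notin_neq HW nU).
- case: (eqVneq W B)=> [E|_]; first by rewrite E HB in HW.
  case: (eqVneq W C)=> [E|_]; first by rewrite E HC in HW.
  by rewrite /=; case: (W == B :|: C).
Qed.

Lemma pred_unique x x' y e : cov x y -> cov x' y -> lam x y = lam x' y ->
  isNCD (x, e) -> isNCD (x', e) -> x = x'.
Proof.
move=> /cover_dec [nx ny [B [C [b [HB HC nBC g Ey]]]]].
move=> /cover_dec [nx' _ [B' [C' [b' [HB' HC' nBC' g' Ey']]]]].
have px : part x by case/isNCP: nx.
have px' : part x' by case/isNCP: nx'.
have py : part y by case/isNCP: ny.
rewrite {1}Ey {1}Ey' (lam_merge px HB HC nBC g) (lam_merge px' HB' HC' nBC' g') => Eb.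
have Ebb : b = b' by apply: val_inj.
subst b'.
move=> /isNCDP [_ D1] /isNCDP [_ D2].
have EU : B :|: C = B' :|: C'.
  apply: (part_eq py (x := b)).
  - by rewrite Ey merge_mem eqxx orbT.
  - by rewrite Ey' merge_mem eqxx orbT.
  - by rewrite inE (proj1 g).
  - by rewrite inE (proj1 g').
case: (part_ne px HC)=> c0 c0C; case: (part_ne px' HC')=> c0' c0C'.
have EC : C = C' by apply: (Dy_unique g g' EU c0C c0C' (D1 C HC) (D2 C' HC')).
subst C'.
have EB : B = B'.
  apply/setP=> w; apply/idP/idP=> h.
  - have : w \in B' :|: C by rewrite -EU inE h.
    rewrite inE=> /orP [//|wC]; by case: (part_disj px HB HC nBC h wC).
  - have : w \in B :|: C by rewrite EU inE h.
    rewrite inE=> /orP [//|wC]; by case: (part_disj px' HB' HC' nBC' h wC).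
subst B'.
by rewrite (unmerge px HB HC nBC) (unmerge px' HB' HC' nBC') -Ey -Ey'.
Qed.

Lemma chain_det s t : path cov z s -> path cov z t -> last z s = last z t ->
  labs s = labs t -> s = t.
Proof.
elim/last_ind: s t=> [|s y IH] t.
- by case: t=> // y t _ _ _; rewrite /labs /=.
- case/lastP: t=> [|t y']; first by move=> _ _ _; rewrite labs_rcons => /(congr1 size); rewrite size_rcons.
  rewrite !rcons_path !last_rcons=> /andP [ps cy] /andP [pt cy'] Ey.
  subst y'; rewrite !labs_rcons=> /rcons_inj [El Elam].
  have Elast : last z s = last z t.
    apply: (pred_unique cy cy' Elam (e := cntf s)); first exact: (Phi_NCD ps).
    have := Phi_NCD pt; rewrite /PhiR.
    by have -> : cntf t = cntf s by apply/ffunP=> a; rewrite !ffunE El.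
  by rewrite (IH t ps pt Elast El).
Qed.

End Chains.

Section Surj.
Variable n : nat.
Local Notation T := ('I_n).
Local Notation PT := {set {set T}}.
Local Notation z := (zNC n).
Local Notation cov := (@coverNC n).
Local Notation lam := (@lamNC n).
Implicit Types (S B C D : {set T}) (e : {ffun T -> nat}) (s t : seq PT).

Lemma single_nc (X : {set T}) c : ~~ crossing X [set c] /\ ~~ crossing [set c] X.
Proof.
split; apply/negP=> /crossingP [x1 [x2 [x3 [x4 [h1 h2 h3 [h4 h5 h6 h7]]]]]].
- move: h6 h7; rewrite !inE=> /eqP E1 /eqP E2.
  by move: (ltn_trans h2 h3); rewrite E1 E2 ltnn.
- move: h4 h5; rewrite !inE=> /eqP E1 /eqP E2.
  by move: (ltn_trans h1 h2); rewrite E1 E2 ltnn.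
Qed.

Lemma split_NCD (P : PT) e D : isNCD (P, e) -> D \in P -> 1 < #|D| ->
  exists P' : PT, exists e' B C b, [/\ isNCD (P', e'), B \in P', C \in P', B != C &
    [/\ gapped B C b, P = mergeP P' B C, e = bump e' b &
        \sum_(x in [set: T]) e' x < \sum_(x in [set: T]) e x]].
Proof.
move=> /isNCDP [nP DP] HD cardD2; simpl in nP, DP.
have pP : part P by case/isNCP: nP.
case: (DP D HD)=> totD preD.
have [a0 /andP [a0D ea0]] : exists a0, (a0 \in D) && (0 < e a0).
  case: (boolP [exists x, (x \in D) && (0 < e x)])=> [/existsP //|/existsPn H].
  have : \sum_(x in D) e x = 0.
    by apply: big1=> x xD; have := H x; rewrite xD /= lt0n negbK => /eqP.
  rewrite totD; lia.
have P0 : (a0 \in D) && (0 < e a0) by rewrite a0D ea0.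
case: (@arg_maxnP _ a0 (fun y : T => (y \in D) && (0 < e y)) (fun y : T => val y) P0)
  => a /andP [aD ea] amax.
have zero : forall x, x \in D -> a < x -> e x = 0.
  move=> x xD ax; apply/eqP; rewrite -leqn0 leqNgt; apply/negP=> ex.
  by have := amax x; rewrite xD ex /= => /(_ isT); rewrite leqNgt ax.
have [c1 /andP [c1D ac1]] : exists c1, (c1 \in D) && (a < c1).
  case: (boolP [exists x, (x \in D) && (a < x)])=> [/existsP //|/existsPn H].
  have allb : forall x, x \in D :\ a -> x < a.
    move=> x; rewrite !inE=> /andP [xa xD]; have := H x; rewrite xD /= -leqNgt.
    rewrite leq_eqVlt=> /orP [/eqP E|//]; by rewrite (val_inj E) eqxx in xa.
  case: (cnt_all allb)=> Ec Es.
  have E1 := sum_D1 (fun x : T => x < a) (fun _ => 1) aD.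
  have E2 := sum_D1 (fun x : T => x < a) e aD.
  have E3 := sum_D1 (fun _ => true) e aD.
  rewrite ltnn -/(cnt D a) -/(cnt (D :\ a) a) in E1.
  rewrite ltnn -/(sm e D a) -/(sm e (D :\ a) a) in E2.
  rewrite !big_condT in E3.
  have cardD : #|D| = #|D :\ a|.+1 by rewrite (cardsD1 a D) aD.
  have hlt : cnt D a < #|D| by rewrite E1 add0n Ec cardD.
  have := preD a hlt; rewrite E1 E2 Ec (Es e) => h; exfalso.
  have := totD; rewrite E3 cardD; move: h ea.
  set s := \sum_(i in D :\ a) e i; clear; lia.
have P1 : (c1 \in D) && (a < c1) by rewrite c1D ac1.
case: (@arg_minnP _ c1 (fun y : T => (y \in D) && (a < y)) (fun y : T => val y) P1)
  => c /andP [cD ac] cmin.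
case: (Dy_split (conj totD preD) aD ea zero cD ac)=> DB DC.
set B := D :\ c; set C := [set c].
set P' := (P :\ D) :|: [set B; C].
have aB : a \in B by rewrite !inE aD andbT; apply/negP=> /eqP E; rewrite E ltnn in ac.
have cC : c \in C by rewrite inE.
have nBC : B != C by apply/negP=> /eqP E; move: aB; rewrite E inE => /eqP E'; rewrite E' ltnn in ac.
have sB : B \subset D by apply/subsetP=> x; rewrite !inE=> /andP [].
have sC : C \subset D by apply/subsetP=> x; rewrite !inE=> /eqP ->.
have memP' : forall W, (W \in P') = ((W \in P) && (W != D)) || (W == B) || (W == C).
  by move=> W; rewrite !inE andbC orbA.
have oldD : forall G, G \in P -> G != D -> forall x, x \in D -> x \in G -> False.
  by move=> G HG nG x xD xG; apply: (part_disj pP HG HD nG xG xD).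
have BnP : B \notin P.
  apply/negP=> HB'; have E := part_eq pP HB' HD aB aD.
  by move: cD; rewrite -E !inE eqxx.
have CnP : C \notin P.
  apply/negP=> HC'; have E := part_eq pP HC' HD cC cD.
  by move: aD; rewrite -E inE => /eqP E'; rewrite E' ltnn in ac.
have pP' : part P'.
  apply/partP; split.
  - rewrite memP' negb_or negb_or; apply/andP; split; first (apply/andP; split).
    + by apply/negP=> /andP [h _]; case/partP: pP=> s0 _ _; rewrite h in s0.
    + by apply/negP=> /eqP E; move: aB; rewrite -E inE.
    + by apply/negP=> /eqP E; move: cC; rewrite -E inE.
  - move=> x; case: (part_cov x pP)=> X HX xX.
    case: (eqVneq X D)=> [EX|nX].
    + case: (eqVneq x c)=> [->|nxc].
      * by exists C; rewrite ?memP' ?eqxx ?orbT.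
      * by exists B; rewrite ?memP' ?eqxx ?orbT //= !inE nxc -EX.
    + by exists X; rewrite // memP' HX nX.
  - move=> X Y x; rewrite !memP'.
    have key : forall G, (G \in P) && (G != D) -> x \in G -> x \in D -> False.
      by move=> G /andP [HG nG] xG xD; apply: (oldD G HG nG x xD xG).
    case/orP=> [/orP [hX|/eqP ->]|/eqP ->]; case/orP=> [/orP [hY|/eqP ->]|/eqP ->] //.
    + by case/andP: hX=> HX _; case/andP: hY=> HY _; apply: (part_eq pP HX HY).
    + by move=> xX xB; case: (key X hX xX (subsetP sB x xB)).
    + by move=> xX xC; case: (key X hX xX (subsetP sC x xC)).
    + by move=> xB xY; case: (key Y hY xY (subsetP sB x xB)).
    + by rewrite !inE=> /andP [h _] /eqP E; rewrite E eqxx in h.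
    + by move=> xC xY; case: (key Y hY xY (subsetP sC x xC)).
    + by rewrite !inE=> /eqP E /andP [h _]; rewrite E eqxx in h.
have nP' : isNC P'.
  apply/isNCP; split=> // X Y; rewrite !memP'.
  case/isNCP: (nP)=> _ ncP.
  have oldnc : forall G S, (G \in P) && (G != D) -> S \subset D -> ~~ crossing G S /\ ~~ crossing S G.
    move=> G S /andP [HG nG] sS; split.
    - by apply: (nc_sub nP HG HD nG (subxx G) sS).
    - by apply: (nc_sub nP HD HG _ sS (subxx G)); rewrite eq_sym.
  case/orP=> [/orP [hX|/eqP ->]|/eqP ->]; case/orP=> [/orP [hY|/eqP ->]|/eqP ->] //; move=> nXY.
  + by case/andP: hX=> HX _; case/andP: hY=> HY _; apply: ncP.
  + by case: (oldnc X B hX sB).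
  + by case: (oldnc X C hX sC).
  + by case: (oldnc Y B hY sB).
  + by rewrite eqxx in nXY.
  + by case: (single_nc B c).
  + by case: (oldnc Y C hY sC).
  + by case: (single_nc B c).
  + by rewrite eqxx in nXY.
have g : gapped B C a.
  split=> // x; rewrite inE=> /eqP ->; split=> // b' b'B ab'.
  move: b'B; rewrite !inE=> /andP [nb' b'D].
  have := cmin b'; rewrite b'D ab' /= => /(_ isT); rewrite leq_eqVlt=> /orP [/eqP E|//].
  by rewrite (val_inj E) eqxx in nb'.
exists P', (decf e a), B, C, a; split=> //.
- apply/isNCDP; split=> // X; rewrite /= memP'.
  case/orP=> [/orP [/andP [HX nX]|/eqP ->]|/eqP ->] //.
  apply: Dy_eq (DP X HX)=> x xX; rewrite ffunE; case: eqP=> // E.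
  by case: (oldD X HX nX a aD); rewrite -E.
- by rewrite memP' eqxx orbT.
- by rewrite memP' eqxx !orbT.
- split=> //.
  + apply/setP=> W; rewrite merge_mem !memP'.
    have EU : B :|: C = D by apply/setP=> x; rewrite /B /C !inE; case: (eqVneq x c)=> [->|] /=; rewrite ?cD ?orbF ?orbT.
    rewrite EU; case: (eqVneq W D)=> [->|nW]; first by rewrite HD orbT.
    case HW: (W \in P)=> /=.
    * by rewrite (notin_neq HW BnP) (notin_neq HW CnP).
    * by case: (W == B); case: (W == C).
  + by rewrite bump_dec.
  + have := sum_dec [set: T] (fun _ => true) ea; rewrite !big_condT inE /= => <-.
    by rewrite addn1.
Qed.


Lemma blk1 (X : {set T}) x : #|X| <= 1 -> x \in X -> X = [set x].
Proof.
move=> h xX; have : #|X| == 1.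
  by rewrite eqn_leq h /=; apply/card_gt0P; exists x.
case/cards1P=> w EX; move: xX; rewrite EX inE=> /eqP ->; by [].
Qed.

Lemma base_case (P : PT) e : isNCD (P, e) -> (forall D, D \in P -> #|D| <= 1) ->
  P = z /\ e = [ffun _ => 0].
Proof.
move=> /isNCDP [nP DP] H; simpl in nP, DP.
have pP : part P by case/isNCP: nP.
split.
- apply/setP=> W; apply/idP/idP.
  + move=> HW; case: (part_ne pP HW)=> x xW.
    by rewrite (blk1 (H W HW) xW); apply: imset_f.
  + case/imsetP=> x _ ->; case: (part_cov x pP)=> X HX xX.
    by rewrite -(blk1 (H X HX) xX).
- apply/ffunP=> x; rewrite ffunE; case: (part_cov x pP)=> X HX xX.
  case: (DP X HX); rewrite (blk1 (H X HX) xX) big_set1 cards1.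
  by move=> -> _.
Qed.

Lemma Phi_surj (P : PT) e : isNCD (P, e) -> exists s, path cov z s /\ PhiR s = (P, e).
Proof.
move: {2}(\sum_(x in [set: T]) e x) (leqnn (\sum_(x in [set: T]) e x))=> k.
elim: k P e=> [|k IH] P e hk H.
- case: (boolP [exists D in P, 1 < #|D|]).
  + case/exists_inP=> D HD cD.
    case: (split_NCD H HD cD)=> P' [e' [B [C [b [_ _ _ _ [_ _ _ lt]]]]]].
    by move: (leq_trans lt hk).
  + rewrite negb_exists_in=> /forall_inP Hs.
    have Hs' : forall D, D \in P -> #|D| <= 1 by move=> D HD; rewrite leqNgt; apply: Hs.
    case: (base_case H Hs')=> -> ->; exists [::]; split=> //.
- case: (boolP [exists D in P, 1 < #|D|]).
  + case/exists_inP=> D HD cD.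
    case: (split_NCD H HD cD)=> P' [e' [B [C [b [H' HB HC nBC [g EP Ee lt]]]]]].
    have hk' : \sum_(x in [set: T]) e' x <= k by rewrite -ltnS; apply: leq_trans lt hk.
    case: (IH P' e' hk' H')=> s [ps Es].
    case: Es=> Elast Ecnt.
    have nP' : isNC P' by case/isNCDP: H'.
    have nP : isNC P by case/isNCDP: H.
    have pP' : part P' by case/isNCP: nP'.
    exists (rcons s P); split.
    * have nM : isNC (mergeP P' B C) by rewrite -EP.
      rewrite rcons_path ps Elast /= EP; exact: (gapped_cover nP' nM HB HC nBC g).
    * rewrite /PhiR last_rcons (@cntf_rcons _ _ _ b) ?Ecnt ?Ee //.
      by rewrite Elast {1}EP (lam_merge pP' HB HC nBC g).
  + rewrite negb_exists_in=> /forall_inP Hs.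
    have Hs' : forall D, D \in P -> #|D| <= 1 by move=> D HD; rewrite leqNgt; apply: Hs.
    case: (base_case H Hs')=> -> ->; exists [::]; split=> //.

Qed.

Lemma card_zNC : #|z| = n.
Proof. by rewrite card_imset ?card_ord //; apply: set1_inj. Qed.

Lemma chain_rank x s : path cov x s -> forall i, i <= size s -> #|nth x (x :: s) i| + i = #|x|.
Proof.
elim: s x=> [|y s IH] x /=.
- by move=> _ [|i] //; rewrite addn0.
- case/andP=> cxy ps [|i]; first by rewrite addn0.
  rewrite ltnS=> hi; rewrite (set_nth_default y) /=; last by rewrite ltnS.
  case/cover_dec: cxy=> nx _ [B [C [b [HB HC nBC g Ey]]]].
  have px : part x by case/isNCP: nx.
  move: (IH y ps i hi) (card_merge px HB HC nBC); rewrite -Ey => h1 <-; by rewrite -h1 addnS addn1.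
Qed.

Lemma prefix s t : path cov z s -> path cov z t -> {subset z :: s <= z :: t} ->
  exists w, t = s ++ w.
Proof.
move=> ps pt sub.
have key : forall i, i <= size s -> i <= size t /\ nth z (z :: t) i = nth z (z :: s) i.
  move=> i hi.
  have : nth z (z :: s) i \in z :: t by apply: sub; apply: mem_nth; rewrite ltnS.
  case/(nthP z)=> j hj Ej.
  have r1 := chain_rank ps hi.
  have r2 := chain_rank pt (hj : j <= size t).
  rewrite Ej in r2; have Eij : i = j by move: r1 r2; clear; lia.
  by subst j; split.
have [hs _] := key (size s) (leqnn _).
exists (drop (size s) t); rewrite -{1}(cat_take_drop (size s) t); congr (_ ++ _).
apply: (@eq_from_nth _ z); first by rewrite size_takel.
move=> i; rewrite size_takel // => hi; rewrite nth_take //.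
have [_ E] := key i.+1 hi; by move: E.
Qed.

End Surj.

Lemma diff_one (A : eqType) (s t : seq A) x0 k : size s = size t ->
  (forall j, j != k -> nth x0 s j = nth x0 t j) ->
  take k t = take k s /\ drop k.+1 t = drop k.+1 s.
Proof.
move=> Es H; split.
- apply: (@eq_from_nth _ x0); first by rewrite !size_take_min Es.
  move=> j; rewrite size_take_min => hj.
  have hjk : j < k by move: hj; clear; lia.
  rewrite !nth_take //; apply/esym/H; by rewrite neq_ltn hjk.
- apply: (@eq_from_nth _ x0); first by rewrite !size_drop Es.
  move=> j _; rewrite !nth_drop; apply/esym/H.
  by rewrite neq_ltn ltnS leq_addr orbT.
Qed.

Lemma nth_mid (A : Type) (x0 : A) p u w j :
  nth x0 (x0 :: p ++ u :: w) j =
  if j <= size p then nth x0 (x0 :: p) j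
  else if j == (size p).+1 then u else nth x0 w (j - (size p).+2).
Proof.
rewrite -cat_cons nth_cat /= ltnS; case: leqP=> // h.
case: eqP=> [->|ne]; first by rewrite subnn.
have : j - (size p).+1 = (j - (size p).+2).+1.
  by move: h ne; clear; move=> h ne; lia.
by move=> ->.
Qed.

Lemma nth_lastp (A : Type) (x0 : A) p : nth x0 (x0 :: p) (size p) = last x0 p.
Proof. by have := nth_last x0 (x0 :: p). Qed.

Lemma nth_mid0 (A : Type) (x0 : A) p u w : nth x0 (x0 :: p ++ u :: w) (size p) = last x0 p.
Proof. by rewrite nth_mid leqnn nth_lastp. Qed.
Lemma nth_mid1 (A : Type) (x0 : A) p u w : nth x0 (x0 :: p ++ u :: w) (size p).+1 = u.
Proof. by rewrite nth_mid ltnn eqxx. Qed.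
Lemma nth_mid2 (A : Type) (x0 : A) p u v w : nth x0 (x0 :: p ++ u :: v :: w) (size p).+2 = v.
Proof.
rewrite nth_mid ifN; last by rewrite -ltnNge; apply: leqnSn.
by rewrite ifN ?subnn //; apply/negP=> /eqP; clear; lia.
Qed.

Lemma nth_catp0 (A : Type) (x0 : A) p u w : nth x0 (p ++ u :: w) (size p) = u.
Proof. by rewrite nth_cat ltnn subnn. Qed.
Lemma nth_catp1 (A : Type) (x0 : A) p u v w : nth x0 (p ++ u :: v :: w) (size p).+1 = v.
Proof. by rewrite nth_cat ltnNge leqnSn /= subSnn. Qed.

Fixpoint inv (l : seq nat) : nat :=
  if l is x :: l' then count (fun y => x < y) l' + inv l' else 0.

Lemma inv_swap p a b q : a < b -> inv (p ++ a :: b :: q) = (inv (p ++ b :: a :: q)).+1.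
Proof.
move=> ab; elim: p=> [|x p IH] /=.
- rewrite ab ltnNge (ltnW ab) /=; lia.
- rewrite IH !count_cat /=; lia.
Qed.

Definition geqr (a b : nat) := b <= a.

Lemma find_ascent (T : Type) (f : T -> T -> nat) s x0 : ~~ sorted geqr (pairmap f x0 s) ->
  exists p u v q, s = p ++ u :: v :: q /\ f (last x0 p) u < f u v.
Proof.
elim: s x0=> [|u s IH] x0 //=.
case: s IH=> [|v s] IH //=.
case: (ltnP (f x0 u) (f u v))=> h.
- by move=> _; exists [::], u, v, s.
- rewrite /geqr h /= => ns.
  case: (IH u ns)=> p [u' [v' [q [E lt]]]].
  by exists (u :: p), u', v', q; rewrite E.
Qed.

Section Q.
Variable n : nat.
Local Notation T := ('I_n).
Local Notation PT := {set {set T}}.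
Local Notation z := (zNC n).
Local Notation cov := (@coverNC n).
Local Notation lam := (@lamNC n).
Local Notation chain := (@chainT PT z cov).
Local Notation qexchN := (@qexch PT z cov lam).
Local Notation qsimN := (@qsim PT z cov lam).

Lemma struct_qexch (c d : chain) p u u' v q :
  val c = p ++ u :: v :: q -> val d = p ++ u' :: v :: q ->
  lam (last z p) u < lam u v -> lam (last z p) u' = lam u v ->
  lam u' v = lam (last z p) u -> qexchN c d.
Proof.
move=> Ec Ed h1 h2 h3; rewrite /qexch /full_chain Ec Ed.
split; first by rewrite /= !size_cat.
exists (size p).+1; split; first split=> //.
- by rewrite /= size_cat /=; lia.
- move=> j nj; rewrite !nth_mid; case: leqP=> // _; by rewrite (negbTE nj).
- by rewrite /= !nth_mid0 !nth_catp0 !nth_catp1.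
Qed.


Lemma qexch_struct (c d : chain) : qexchN c d -> exists p u u' v q,
  [/\ val c = p ++ u :: v :: q, val d = p ++ u' :: v :: q,
      lam (last z p) u' = lam u v & lam u' v = lam (last z p) u].
Proof.
case: c d=> s ps [t pt]; rewrite /qexch /full_chain /=.
case=> [[Es] [[|k] [[_ ii Heq] [h1 h2 h3]]]] //=; simpl in ii, h1, h2, h3.
have Heq' : forall j, j != k -> nth z s j = nth z t j.
  by move=> j nj; apply: (Heq j.+1).
case: (diff_one Es Heq')=> Etake Edrop.
rewrite ltnS in ii.
have ks : k < size s by apply: ltnW.
have kt : k < size t by rewrite -Es.
have [p [u [u' [v [q [Es_ Et_ Ep]]]]]] : exists p u u' v q,
  [/\ s = p ++ u :: v :: q, t = p ++ u' :: v :: q & size p = k].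
  exists (take k s), (nth z s k), (nth z t k), (nth z s k.+1), (drop k.+2 s); split.
  - by rewrite -{1}(cat_take_drop k s) (drop_nth z ks) (drop_nth z ii).
  - rewrite -{1}(cat_take_drop k t) (@drop_nth _ z k t kt) Etake Edrop.
    by rewrite (drop_nth z ii).
  - by rewrite size_takel // ltnW.
subst s t k.
exists p, u, u', v, q; split=> //.
- by move: h2; rewrite !nth_mid0 !nth_catp0 !nth_catp1.
- by move: h3; rewrite !nth_mid0 !nth_catp0 !nth_catp1.
Qed.

Lemma labs_struct p u v q :
  labs (p ++ u :: v :: q) = labs p ++ lam (last z p) u :: lam u v :: pairmap lam v q.
Proof. by rewrite /labs pairmap_cat. Qed.

Lemma qexch_perm (c d : chain) : qexchN c d ->
  last z (val c) = last z (val d) /\ perm_eq (labs (val c)) (labs (val d)).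
Proof.
case/qexch_struct=> p [u [u' [v [q [Ec Ed h2 h3]]]]].
rewrite Ec Ed !last_cat /=; split=> //.
rewrite !labs_struct perm_cat2l h2 h3.
by rewrite -[_ :: _ :: _]/([:: _] ++ [:: _] ++ _) perm_catCA.
Qed.

Lemma qsim_Phi (c d : chain) : qsimN c d -> PhiR (val c) = PhiR (val d).
Proof.
case=> El H; rewrite /PhiR El; congr (_, _).
have : perm_eq (labs (val c)) (labs (val d)).
  elim: H {El}=> [x y /qexch_perm [_ //]|x|x y _ h|x y w _ h1 _ h2].
  - exact: perm_refl.
  - by rewrite perm_sym.
  - exact: perm_trans h1 h2.
move/permP=> Hp; apply/ffunP=> a; rewrite !ffunE; exact: Hp.
Qed.


Lemma labs_lt s : path cov z s -> all (fun v => v < n) (labs s).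
Proof.
elim/last_ind: s=> [|s y IH] //; rewrite rcons_path labs_rcons all_rcons=> /andP [ps cy].
rewrite (IH ps) andbT.
case/cover_dec: (cy)=> nP _ [B [C [b [HB HC nBC g Ey]]]].
have pP : part (last z s) by case/isNCP: nP.
by rewrite Ey (lam_merge pP HB HC nBC g) ltn_ord.
Qed.

Lemma cntf_perm s t : path cov z s -> path cov z t -> cntf s = cntf t ->
  perm_eq (labs s) (labs t).
Proof.
move=> ps pt E; apply/allP=> v; rewrite mem_cat=> /orP [vin|vin].
- have vlt : v < n by move/allP: (labs_lt ps); apply.
  by have := congr1 (fun f : {ffun T -> nat} => f (Ordinal vlt)) E; rewrite !ffunE /= => ->.
- have vlt : v < n by move/allP: (labs_lt pt); apply.
  by have := congr1 (fun f : {ffun T -> nat} => f (Ordinal vlt)) E; rewrite !ffunE /= => ->.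
Qed.

Lemma qsim_refl (c : chain) : qsimN c c.
Proof. by split=> //; apply: rst_refl. Qed.

Lemma qsim_sym (c d : chain) : qsimN c d -> qsimN d c.
Proof. by case=> E H; split; [rewrite E | apply: rst_sym]. Qed.

Lemma qsim_trans (c d w : chain) : qsimN c d -> qsimN d w -> qsimN c w.
Proof. by case=> E1 H1 [E2 H2]; split; [rewrite E1 E2 | apply: rst_trans H1 H2]. Qed.

Lemma sort_step (c : chain) : ~~ sorted geqr (labs (val c)) ->
  exists d : chain, qsimN c d /\ inv (labs (val c)) = (inv (labs (val d))).+1.
Proof.
move=> nso.
case: (find_ascent nso)=> p [u [v [q [Ec lt]]]].
have pc := valP c; rewrite Ec cat_path /= in pc.
case/and4P: pc=> pp c1 c2 pq.
case: (switch c1 c2 lt)=> P' [d1 d2 l1 l2].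
have pt : path cov z (p ++ P' :: v :: q) by rewrite cat_path /= pp d1 d2 pq.
pose d := exist _ (p ++ P' :: v :: q) pt : chain.
have hq : qexchN c d by apply: (struct_qexch (u := u) (v := v) Ec).
exists d; split.
- by split; [rewrite Ec /= !last_cat | apply: rst_step].
- by rewrite Ec /= !labs_struct l1 l2; apply: inv_swap.
Qed.

Lemma sort_chain (c : chain) : exists d : chain, qsimN c d /\ sorted geqr (labs (val d)).
Proof.
move: {2}(inv (labs (val c))) (leqnn (inv (labs (val c))))=> k.
elim: k c=> [|k IH] c hk;
  (case: (boolP (sorted geqr (labs (val c))))=> [so|nso];
    [by exists c; split=> //; apply: qsim_refl|]);
  case: (sort_step nso)=> d [qcd hinv].
- by move: hk; rewrite hinv.
- have hk' : inv (labs (val d)) <= k by rewrite -ltnS -hinv.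
  case: (IH d hk')=> d' [q' so]; exists d'; split=> //.
  exact: qsim_trans qcd q'.
Qed.

Lemma Phi_inj (c d : chain) : PhiR (val c) = PhiR (val d) -> qsimN c d.
Proof.
move=> E.
case: (sort_chain c)=> c' [qc so1]; case: (sort_chain d)=> d' [qd so2].
have E' : PhiR (val c') = PhiR (val d') by rewrite -(qsim_Phi qc) -(qsim_Phi qd).
case: E'=> El Ecnt.
have hp := cntf_perm (valP c') (valP d') Ecnt.
have Elabs : labs (val c') = labs (val d').
  apply: (sorted_eq (leT := geqr)) => //.
  - by move=> a b w h1 h2; apply: leq_trans h2 h1.
  - by move=> a b /andP [h1 h2]; apply/eqP; rewrite eqn_leq; apply/andP; split; [exact: h2 | exact: h1].
have Ecd : c' = d' by apply: val_inj; apply: chain_det (valP c') (valP d') El Elabs.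
subst d'; exact: qsim_trans qc (qsim_sym qd).
Qed.

End Q.

Section Main.
Variable n : nat.
Local Notation T := ('I_n).
Local Notation PT := {set {set T}}.
Local Notation z := (zNC n).
Local Notation cov := (@coverNC n).
Local Notation lam := (@lamNC n).
Local Notation chain := (@chainT PT z cov).
Local Notation qsimN := (@qsim PT z cov lam).
Local Notation Qc := (@Qtype PT z cov lam).

Definition PhiN (c : chain) : NCD n := exist _ (PhiR (val c)) (Phi_NCD (valP c)).

Lemma PhiN_eq (c d : chain) : PhiR (val c) = PhiR (val d) -> PhiN c = PhiN d.
Proof. by move=> E; apply: val_inj. Qed.

Definition rep (X : Qc) : chain := proj1_sig (constructive_indefinite_description _ (proj2_sig X)).

Lemma rep_spec (X : Qc) : proj1_sig X = qsimN (rep X).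
Proof. exact: (proj2_sig (constructive_indefinite_description _ (proj2_sig X))). Qed.

Definition fQ (X : Qc) : NCD n := PhiN (rep X).

Definition cls (c : chain) : Qc := exist _ (qsimN c) (ex_intro _ c erefl).

Lemma Qext (X Y : Qc) : proj1_sig X = proj1_sig Y -> X = Y.
Proof.
case: X=> PX hX; case: Y=> PY hY /= E; subst PY.
by rewrite (proof_irrelevance _ hX hY).
Qed.

Lemma cls_eq (c d : chain) : qsimN c d -> cls c = cls d.
Proof.
move=> H; apply: Qext=> /=; apply: functional_extensionality=> w.
apply: propositional_extensionality; split=> h.
- exact: qsim_trans (qsim_sym H) h.
- exact: qsim_trans H h.
Qed.

Lemma X_cls (X : Qc) : X = cls (rep X).
Proof. by apply: Qext; rewrite /= -rep_spec. Qed.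

Lemma memX (X : Qc) (c : chain) : proj1_sig X c -> qsimN (rep X) c.
Proof. by rewrite rep_spec. Qed.

Lemma fQ_cls (c : chain) : fQ (cls c) = PhiN c.
Proof.
apply: PhiN_eq; apply: qsim_Phi; apply: memX=> /=; exact: qsim_refl.
Qed.

Lemma fQ_inj (X Y : Qc) : fQ X = fQ Y -> X = Y.
Proof.
move=> /(congr1 val) /= E.
by rewrite (X_cls X) (X_cls Y); apply: cls_eq; apply: Phi_inj.
Qed.

Definition gQ (F : NCD n) : Qc :=
  let H := Phi_surj (valP F) in
  cls (exist _ (proj1_sig (constructive_indefinite_description _ H))
     (proj1 (proj2_sig (constructive_indefinite_description _ H)))).

Lemma fQ_gQ (F : NCD n) : fQ (gQ F) = F.
Proof.
rewrite /gQ fQ_cls; apply: val_inj=> /=.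
case: (constructive_indefinite_description _ _)=> s [ps Es] /=.
case: F Es=> [[P e] HF] /= Es; exact: Es.
Qed.

Lemma step_mergeD (F G : NCD n) s y : path cov z (rcons s y) ->
  val F = PhiR s -> val G = PhiR (rcons s y) -> mergeD F G.
Proof.
rewrite rcons_path=> /andP [ps cy] EF EG.
case/cover_dec: (cy)=> nP nQ [B [C [b [HB HC nBC g Ey]]]].
have pP : part (last z s) by case/isNCP: nP.
case: (part_ne pP HC)=> c0 c0C.
rewrite /mergeD EF EG /=.
exists B, C; split=> //; first exact: (gapped_smin g c0C).
exists b; first exact: (proj1 g).
split=> //; first exact: (proj2 g).
- by rewrite last_rcons Ey.
- by rewrite (@cntf_rcons _ _ _ b) // Ey (lam_merge pP HB HC nBC g).
Qed.

Lemma mergeD_step (F G : NCD n) s : mergeD F G -> val F = PhiR s -> path cov z s ->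
  path cov z (rcons s (val G).1) /\ PhiR (rcons s (val G).1) = val G.
Proof.
case: F=> [[P e] HF]; case: G=> [[Q e'] HG].
rewrite /mergeD /= => [[B [C [HB HC nBC lt [b bB [gap EQ Ee']]]]]] [EP Ee] ps.
subst P e.
have nP : isNC (last z s) by case/isNCDP: HF.
have nQ : isNC Q by case/isNCDP: HG.
have pP : part (last z s) by case/isNCP: nP.
have g : gapped B C b by split.
have nM : isNC (mergeP (last z s) B C) by rewrite -EQ.
have cQ : cov (last z s) Q by rewrite EQ; exact: (gapped_cover nP nM HB HC nBC g).
split; first by rewrite rcons_path ps cQ.
rewrite /PhiR last_rcons (@cntf_rcons _ _ _ b) ?Ee' //.
by rewrite EQ (lam_merge pP HB HC nBC g).
Qed.

Lemma ext_NCDle (c d : chain) w : val d = val c ++ w -> NCDle (PhiN c) (PhiN d).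
Proof.
elim/last_ind: w d=> [|w y IH] d Ed.
- have -> : d = c by apply: val_inj; rewrite Ed cats0.
  exact: rt_refl.
- have pd := valP d; rewrite Ed -rcons_cat in pd.
  have pd' := pd; rewrite rcons_path in pd'; case/andP: pd'=> p' _.
  pose d' := exist _ (val c ++ w) p' : chain.
  apply: rt_trans (IH d' erefl) _; apply: rt_step.
  apply: (step_mergeD pd)=> //=; by rewrite Ed rcons_cat.
Qed.

Lemma Qle_refl (X : Qc) : Qle X X.
Proof.
apply: t_step; exists (rep X), (rep X); split=> //; rewrite rep_spec; exact: qsim_refl.
Qed.

Lemma Qle_fwd (X Y : Qc) : Qle X Y -> NCDle (fQ X) (fQ Y).
Proof.
elim=> [X' Y' [c [d [hc hd sub]]]|X' Y' W _ h1 _ h2].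
- have Ec : fQ X' = PhiN c by apply: PhiN_eq; apply: qsim_Phi; apply: memX.
  have Ed : fQ Y' = PhiN d by apply: PhiN_eq; apply: qsim_Phi; apply: memX.
  rewrite Ec Ed; case: (prefix (valP c) (valP d) sub)=> w Ew.
  exact: ext_NCDle Ew.
- exact: rt_trans h1 h2.
Qed.

Lemma NCDle_bwd (F G : NCD n) : NCDle F G ->
  forall X : Qc, fQ X = F -> exists Y, fQ Y = G /\ Qle X Y.
Proof.
elim=> [F' G' hm|F'|F' G' H' _ IH1 _ IH2] X EX.
- have EF : val F' = PhiR (val (rep X)) by rewrite -EX.
  case: (mergeD_step hm EF (valP (rep X)))=> pd Ed.
  pose d := exist _ (rcons (val (rep X)) (val G').1) pd : chain.
  exists (cls d); split.
  + by rewrite fQ_cls; apply: val_inj.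
  + apply: t_step; exists (rep X), d; split=> /=.
    * by rewrite rep_spec; exact: qsim_refl.
    * exact: qsim_refl.
    * by move=> x; rewrite /full_chain /= !in_cons mem_rcons in_cons;
        case/orP=> [->|->]; rewrite ?orbT.
- by exists X; split=> //; apply: Qle_refl.
- case: (IH1 X EX)=> Y1 [E1 l1]; case: (IH2 Y1 E1)=> Y2 [E2 l2].
  by exists Y2; split=> //; apply: t_trans l1 l2.
Qed.

End Main.

Theorem theorem5p7 (n : nat) (hn : 0 < n) :
  poset_iso (@Qle _ (zNC n) (@coverNC n) (@lamNC n)) (@NCDle n).
Proof.
exists (@fQ n); split.
- exists (@gQ n); last exact: fQ_gQ.
  by move=> X; apply: fQ_inj; rewrite fQ_gQ.
- move=> X Y; split; first exact: Qle_fwd.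
  move=> H; case: (NCDle_bwd H (erefl _))=> Y' [E l].
  by rewrite -(fQ_inj E).
Qed.
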